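(* Let $E$ be a Banach space, $P$ a metric space, and $F:[0,+\infty)\times E\times P\to E$ continuous, continuous uniformly with respect to the first variable, such that $\{F(t,\bar u,\mu)\mid t\geq0\}$ is relatively compact for all $\bar u\in E$, $\mu\in P$, and such that there is a continuous $\widehat F:E\times P\to E$ with $\widehat F(\bar u,\mu)=\lim_{T\to+\infty,\ \bar v\to\bar u,\ \nu\to\mu}\frac1T\int_0^TF(\tau+h,\bar v,\nu)\,d\tau$ for all $\bar u\in E$, $\mu\in P$, $h>0$, uniformly with respect to $h>0$. Let $Q\subset E$ be compact. Then for any $(T_n)$ in $(0,+\infty)$ with $T_n\to+\infty$ and $(\mu_n)$ in $P$ with $\mu_n\to\mu_0$, the convergence $\lim_{n\to+\infty}\frac1{T_n}\int_0^{T_n}F(\tau+h,\bar w,\mu_n)\,d\tau=\widehat F(\bar w,\mu_0)$ is uniform with respect to $\bar w\in Q$ and $h>0$. *)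

(* Defs.v *)
From Stdlib Require Import Reals List.
From Coquelicot Require Import Coquelicot.
Open Scope R_scope.

Record MetricSpace := {
  ms_carrier :> Type;
  mdist : ms_carrier -> ms_carrier -> R;
  mdist_nonneg : forall x y, 0 <= mdist x y;
  mdist_eq0 : forall x y, mdist x y = 0 <-> x = y;
  mdist_sym : forall x y, mdist x y = mdist y x;
  mdist_triangle : forall x y z, mdist x z <= mdist x y + mdist y z
}.

Definition compact_set {E : CompleteNormedModule R_AbsRing} (K : E -> Prop) : Prop :=
  forall (I : Type) (U : I -> E -> Prop),
    (forall i, open (U i)) ->
    (forall x, K x -> exists i, U i x) ->
    exists l : list I, forall x, K x -> exists i, In i l /\ U i x.

Definition closure_set {E : CompleteNormedModule R_AbsRing} (A : E -> Prop) : E -> Prop :=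
  fun x => forall eps, 0 < eps -> exists y, A y /\ norm (minus y x) < eps.

Definition relatively_compact {E : CompleteNormedModule R_AbsRing} (A : E -> Prop) : Prop :=
  compact_set (closure_set A).

Definition avg {E : CompleteNormedModule R_AbsRing} {P : MetricSpace}
  (F : R -> E -> P -> E) (T h : R) (v : E) (nu : P) : E :=
  scal (/ T) (RInt (fun tau => F (tau + h) v nu) 0 T).

(* Main.v *)
Require Import Defs.
From Stdlib Require Import Reals List Lra Lia.
From Coquelicot Require Import Coquelicot.
Open Scope R_scope.

Lemma norm_ball_open (E : CompleteNormedModule R_AbsRing) (w : E) (r : R) :
  open (fun x : E => norm (minus x w) < r).
Proof.
  intros x Hx.
  remember (norm (minus x w)) as d eqn:Hdd.
  assert (Hnf := @norm_factor_gt_0 R_AbsRing E).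
  assert (He : 0 < (r - d) / (2 * @norm_factor R_AbsRing E)).
  { apply Rdiv_lt_0_compat; lra. }
  exists (mkposreal _ He). intros y Hy.
  apply (@norm_compat2 R_AbsRing E) in Hy. simpl in Hy.
  rewrite (minus_trans x).
  eapply Rle_lt_trans. apply (@norm_triangle R_AbsRing E).
  replace (norm_factor * ((r - d) / (2 * norm_factor))) with ((r - d)/2) in Hy
    by (field; lra).
  rewrite <- Hdd. assert (K: forall a, a < (r-d)/2 -> a + d < r) by (intros; lra). apply K. exact Hy.
Qed.

Lemma list_bounds {I : Type} (f g : I -> R) (Hg : forall i, 0 < g i) (l : list I) :
  exists T d, 0 < d /\ forall i, In i l -> f i <= T /\ d <= g i.
Proof.
  induction l as [|a l IH].
  - exists 0, 1. split. lra. intros i [].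
  - destruct IH as [T [d [Hd H]]].
    exists (Rmax T (f a)), (Rmin d (g a)). split.
    + apply Rmin_pos; auto.
    + intros i [<-|Hi].
      * split. apply Rmax_r. apply Rmin_r.
      * destruct (H i Hi). split.
        eapply Rle_trans; [eassumption|apply Rmax_l].
        eapply Rle_trans; [apply Rmin_l|assumption].
Qed.

Theorem lemma2p4 (E : CompleteNormedModule R_AbsRing) (P : MetricSpace)
  (F : R -> E -> P -> E) (Fhat : E -> P -> E)
  (* F continuous on [0,+oo) x E x P *)
  (HFc : forall t u mu eps, 0 <= t -> 0 < eps ->
     exists delta, 0 < delta /\
       forall t' u' mu', 0 <= t' -> Rabs (t' - t) < delta ->
         norm (minus u' u) < delta -> mdist P mu' mu < delta ->
         norm (minus (F t' u' mu') (F t u mu)) < eps)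
  (* continuous in (u, mu) uniformly with respect to t >= 0 *)
  (HFu : forall u mu eps, 0 < eps ->
     exists delta, 0 < delta /\
       forall t u' mu', 0 <= t ->
         norm (minus u' u) < delta -> mdist P mu' mu < delta ->
         norm (minus (F t u' mu') (F t u mu)) < eps)
  (* {F(t,u,mu) | t >= 0} relatively compact *)
  (HFrc : forall u mu, relatively_compact (fun y => exists t, 0 <= t /\ y = F t u mu))
  (* Fhat continuous on E x P *)
  (HFhc : forall u mu eps, 0 < eps ->
     exists delta, 0 < delta /\
       forall u' mu', norm (minus u' u) < delta -> mdist P mu' mu < delta ->
         norm (minus (Fhat u' mu') (Fhat u mu)) < eps)
  (* Fhat(u,mu) = lim_{T->+oo, v->u, nu->mu} avg, uniformly in h > 0 *)
  (HFhat : forall u mu eps, 0 < eps ->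
     exists T0 delta, 0 < delta /\
       forall h T v nu, 0 < h -> T0 < T ->
         norm (minus v u) < delta -> mdist P nu mu < delta ->
         norm (minus (avg F T h v nu) (Fhat u mu)) < eps)
  (Q : E -> Prop) (HQ : compact_set Q)
  (Tn : nat -> R) (HTpos : forall n, 0 < Tn n)
  (HTinf : forall M, exists N, forall n, (N <= n)%nat -> M < Tn n)
  (mun : nat -> P) (mu0 : P)
  (Hmu : forall eps, 0 < eps -> exists N, forall n, (N <= n)%nat -> mdist P (mun n) mu0 < eps) :
  forall eps, 0 < eps -> exists N, forall n w h, (N <= n)%nat -> Q w -> 0 < h ->
    norm (minus (avg F (Tn n) h w (mun n)) (Fhat w mu0)) < eps.
Proof.
  intros eps Heps.
  pose (good := fun p : E * R * R =>
    let '(w, T0, r) := p in 0 < r /\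
    (forall h T v nu, 0 < h -> T0 < T -> norm (minus v w) < r -> mdist P nu mu0 < r ->
       norm (minus (avg F T h v nu) (Fhat w mu0)) < eps / 2) /\
    (forall u', norm (minus u' w) < r -> norm (minus (Fhat u' mu0) (Fhat w mu0)) < eps / 2)).
  pose (I := { p : E * R * R | good p }).
  pose (U := fun (i : I) (x : E) => norm (minus x (fst (fst (proj1_sig i)))) < snd (proj1_sig i)).
  destruct (HQ I U) as [l Hl].
  - intros i. apply norm_ball_open.
  - intros x Qx.
    destruct (HFhat x mu0 (eps/2)) as [T0 [d1 [Hd1 H1]]]. lra.
    destruct (HFhc x mu0 (eps/2)) as [d2 [Hd2 H2]]. lra.
    assert (Hg : good (x, T0, Rmin d1 d2)).
    { simpl. split. apply Rmin_pos; auto. split.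
      - intros h T v nu Hh HT Hv Hnu. apply H1; auto.
        eapply Rlt_le_trans; [eassumption|apply Rmin_l].
        eapply Rlt_le_trans; [eassumption|apply Rmin_l].
      - intros u' Hu. apply H2.
        eapply Rlt_le_trans; [eassumption|apply Rmin_r].
        rewrite (proj2 (mdist_eq0 P mu0 mu0) eq_refl). exact Hd2. }
    exists (exist _ _ Hg). unfold U; simpl.
    assert (Hm : 0 < Rmin d1 d2) by (apply Rmin_pos; auto).
    assert (Hnf := @norm_factor_gt_0 R_AbsRing E).
    assert (Hp : 0 < Rmin d1 d2 / (2 * @norm_factor R_AbsRing E)) by (apply Rdiv_lt_0_compat; lra).
    pose proof (@norm_compat2 R_AbsRing E x x (mkposreal _ Hp) (ball_center x _)) as Hc. simpl in Hc.
    replace (norm_factor * (Rmin d1 d2 / (2 * norm_factor))) with (Rmin d1 d2 / 2) in Hc by (field; lra).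
    eapply Rlt_le_trans; [exact Hc|lra].
  - assert (Hpos : forall i : I, 0 < snd (proj1_sig i)).
    { intros [[[w T0] r] Hg]. simpl. exact (proj1 Hg). }
    destruct (list_bounds (fun i : I => snd (fst (proj1_sig i))) _ Hpos l)
      as [Tm [dm [Hdm Hb]]].
    destruct (HTinf Tm) as [N1 HN1].
    destruct (Hmu dm Hdm) as [N2 HN2].
    exists (Nat.max N1 N2). intros n w h Hn Qw Hh.
    destruct (Hl w Qw) as [[[[wi Ti] ri] Hg] [Hin Hu]].
    destruct (Hb _ Hin) as [HT Hd]. simpl in HT, Hd.
    unfold U in Hu; simpl in Hu.
    destruct Hg as [Hr [Ha Hc]].
    rewrite (minus_trans (Fhat wi mu0)).
    eapply Rle_lt_trans. apply (@norm_triangle R_AbsRing E).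
    assert (A1 : norm (minus (avg F (Tn n) h w (mun n)) (Fhat wi mu0)) < eps / 2).
    { apply Ha; auto.
      - eapply Rle_lt_trans; [exact HT|]. apply HN1. lia.
      - eapply Rlt_le_trans; [|exact Hd]. apply HN2. lia. }
    assert (A2 : norm (minus (Fhat wi mu0) (Fhat w mu0)) < eps / 2).
    { rewrite <- norm_opp, opp_minus. apply Hc; auto. }
    lra.
Qed.
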